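(* Let $\mathcal{H}$ be a complex Hilbert space and let $A\in\mathcal{B}(\mathcal{H})$ satisfy $mI\le A\le MI$ for some scalars $0<m<M$. Then the following assertions are equivalent (in each, $\Phi$ ranges over all unital positive linear maps $\Phi:\mathcal{B}(\mathcal{H})\to\mathcal{B}(\mathcal{K})$, $\mathcal K$ a complex Hilbert space): (i) $\Phi(A^{-1})\le\left(\frac{M+m}{2\sqrt{Mm}}\right)^2\Phi(A)^{-1}$ for every such $\Phi$; (ii) $\langle\Phi(A^{-1})x,x\rangle\le\left(\frac{M+m}{2\sqrt{Mm}}\right)^2\langle\Phi(A)x,x\rangle^{-1}$ for every such $\Phi$ and every unit vector $x\in\mathcal{K}$; (iii) $\Phi(A^{-1})\sharp\Phi(A)\le\frac{M+m}{2\sqrt{Mm}}I$ for every such $\Phi$; (iv) $\Phi(A^2)\le\left(\frac{M+m}{2\sqrt{Mm}}\right)^2\Phi(A)^2$ for every such $\Phi$.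
   Context: $\mathcal{B}(\mathcal{H})$ denotes the bounded linear operators on $\mathcal{H}$; $\le$ is the Löwner order. A linear map $\Phi:\mathcal{B}(\mathcal{H})\to\mathcal{B}(\mathcal{K})$ is positive if it maps positive operators to positive operators, and unital if $\Phi(I)=I$. For positive invertible operators $X,Y$, the geometric mean is $X\sharp Y=X^{1/2}\left(X^{-1/2}YX^{-1/2}\right)^{1/2}X^{1/2}$. *)

(* Defs.v *)
From HB Require Import structures.
From mathcomp Require Import all_boot all_order all_algebra.
From mathcomp Require Import reals.
From mathcomp Require Import complex.
Set Implicit Arguments. Unset Strict Implicit. Unset Printing Implicit Defensive.
Import Order.TTheory GRing.Theory Num.Theory.
Local Open Scope ring_scope.

Record Hilbert (R : realType) := {
  hvec :> lmodType R[i];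
  hip : hvec -> hvec -> R[i];
  hip_linear : forall (a : R[i]) (x y z : hvec),
      hip (a *: x + y) z = a * hip x z + hip y z;
  hip_conj : forall x y : hvec, hip y x = conjc (hip x y);
  hip_ge0 : forall x : hvec, 0 <= hip x x;
  hip_eq0 : forall x : hvec, hip x x = 0 -> x = 0;
  hcomplete : forall u : nat -> hvec,
      (forall e : R, 0 < e -> exists N : nat, forall p q : nat, (N <= p)%N -> (N <= q)%N ->
          Num.sqrt (complex.Re (hip (u p - u q) (u p - u q))) < e) ->
      exists l : hvec, forall e : R, 0 < e -> exists N : nat, forall p : nat, (N <= p)%N ->
          Num.sqrt (complex.Re (hip (u p - l) (u p - l))) < e
}.

Section Ops.
Variable R : realType.
Variable H : Hilbert R.

Definition hnorm (x : H) : R := Num.sqrt (complex.Re (hip x x)).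

Definition bounded_op (T : H -> H) : Prop :=
  (forall (a : R[i]) (x y : H), T (a *: x + y) = a *: T x + T y) /\
  (exists c : R, forall x : H, hnorm (T x) <= c * hnorm x).

Definition idop : H -> H := fun x => x.
Definition scal_op (c : R[i]) : H -> H := fun x => c *: x.
Definition comp_op (S T : H -> H) : H -> H := fun x => S (T x).
Definition add_op (S T : H -> H) : H -> H := fun x => S x + T x.
Definition sub_op (S T : H -> H) : H -> H := fun x => S x - T x.
Definition sscal_op (a : R[i]) (S : H -> H) : H -> H := fun x => a *: S x.

(* Positive operator: <T x, x> >= 0 for all x (in C, 0 <= z means z real >= 0). *)
Definition pos_op (T : H -> H) : Prop :=
  bounded_op T /\ forall x : H, 0 <= hip (T x) x.

Definition loewner (S T : H -> H) : Prop := pos_op (sub_op T S).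

Definition is_inv_op (T Ti : H -> H) : Prop :=
  bounded_op Ti /\ (forall x, T (Ti x) = x) /\ (forall x, Ti (T x) = x).

Definition is_sqrt_op (T S : H -> H) : Prop :=
  pos_op S /\ forall x, S (S x) = T x.

(* G = X # Y = X^{1/2} (X^{-1/2} Y X^{-1/2})^{1/2} X^{1/2}. *)
Definition is_gmean (X Y G : H -> H) : Prop :=
  exists S Si Q : H -> H,
    is_sqrt_op X S /\ is_inv_op S Si /\
    is_sqrt_op (comp_op Si (comp_op Y Si)) Q /\
    G = comp_op S (comp_op Q S).
End Ops.

(* Unital positive linear maps Phi : B(H) -> B(K). Phi is given as a function
   on all maps H -> H; only its values on B(H) are constrained. *)
Definition unital_pos_linear (R : realType) (H K : Hilbert R)
    (Phi : (H -> H) -> (K -> K)) : Prop :=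
  (forall T, bounded_op T -> bounded_op (Phi T)) /\
  (forall (a : R[i]) (S T : H -> H), bounded_op S -> bounded_op T ->
      Phi (add_op (sscal_op a S) T) = add_op (sscal_op a (Phi S)) (Phi T)) /\
  (forall T, pos_op T -> pos_op (Phi T)) /\
  Phi (@idop R H) = @idop R K.

Definition kant (R : realType) (m M : R) : R := (M + m) / (2 * Num.sqrt (M * m)).

(* Main.v *)
Require Import Defs.
From HB Require Import structures.
From mathcomp Require Import all_boot all_order all_algebra.
From mathcomp Require Import reals.
From mathcomp Require Import complex.
From mathcomp Require Import ring lra.
From Stdlib Require Import FunctionalExtensionality.
Import Order.TTheory GRing.Theory Num.Theory.
Local Open Scope ring_scope.

Module Helpers.
Set Implicit Arguments. Unset Strict Implicit. Unset Printing Implicit Defensive.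


Section IP.
Variable R : realType.
Variable V : Hilbert R.
Implicit Types (x y z : V) (a b : R[i]).

Lemma hip0l y : hip (0 : V) y = 0.
Proof.
have := hip_linear 1 (0:V) 0 y; rewrite scale1r addr0 mul1r => h.
by apply/esym/(addrI (hip (0:V) y)); rewrite addr0 -h.
Qed.

Lemma hipDl x y z : hip (x + y) z = hip x z + hip y z.
Proof. by have := hip_linear 1 x y z; rewrite scale1r mul1r. Qed.

Lemma hipZl a x z : hip (a *: x) z = a * hip x z.
Proof. by have := hip_linear a x 0 z; rewrite addr0 hip0l addr0. Qed.

Lemma hipNl x z : hip (- x) z = - hip x z.
Proof. by rewrite -scaleN1r hipZl mulN1r. Qed.

Lemma hipBl x y z : hip (x - y) z = hip x z - hip y z.
Proof. by rewrite hipDl hipNl. Qed.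

Lemma hipDr x y z : hip z (x + y) = hip z x + hip z y.
Proof. by rewrite [LHS]hip_conj [hip z x]hip_conj [hip z y]hip_conj hipDl rmorphD. Qed.

Lemma hipZr a x z : hip z (a *: x) = (conjc a) * hip z x.
Proof. by rewrite [LHS]hip_conj [hip z x]hip_conj hipZl rmorphM. Qed.

Lemma hipNr x z : hip z (- x) = - hip z x.
Proof. by rewrite [LHS]hip_conj [hip z x]hip_conj hipNl rmorphN. Qed.

Lemma hipBr x y z : hip z (x - y) = hip z x - hip z y.
Proof. by rewrite hipDr hipNr. Qed.

Lemma hip0r y : hip y (0 : V) = 0.
Proof. by rewrite hip_conj hip0l rmorph0. Qed.

Definition realc (z : R[i]) := z = (complex.Re z)%:C%C.

Lemma ge0_realc (z : R[i]) : 0 <= z -> realc z.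
Proof.
case: z => a b; rewrite lecE /= => /andP[/eqP b0 _].
by rewrite /realc /= b0.
Qed.

Lemma realc_conj (w : R[i]) : realc w -> conjc w = w.
Proof. by move=> ->; rewrite conjc_real. Qed.

Lemma hip_real x : realc (hip x x).
Proof. exact/ge0_realc/hip_ge0. Qed.

Lemma conjc_realR (r : R) : conjc (r%:C%C) = r%:C%C.
Proof. exact: conjc_real. Qed.

End IP.


Section Lin.
Variable R : realType.
Variable V : Hilbert R.
Implicit Types (x y z : V) (a b : R[i]) (T S : V -> V).

Definition lin T := forall a x y, T (a *: x + y) = a *: T x + T y.

Lemma bounded_lin T : bounded_op T -> lin T.
Proof. by case. Qed.

Lemma lin0 T : lin T -> T 0 = 0.
Proof.
move=> hT; have := hT 1 0 0; rewrite !scale1r addr0 => h.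
by apply/esym/(addrI (T 0)); rewrite addr0 -h.
Qed.

Lemma linD T : lin T -> forall x y, T (x + y) = T x + T y.
Proof. by move=> hT x y; have := hT 1 x y; rewrite !scale1r. Qed.

Lemma linZ T : lin T -> forall a x, T (a *: x) = a *: T x.
Proof. by move=> hT a x; have := hT a x 0; rewrite !addr0 lin0 // addr0. Qed.

Lemma linN T : lin T -> forall x, T (- x) = - T x.
Proof. by move=> hT x; rewrite -scaleN1r linZ // scaleN1r. Qed.

Lemma linB T : lin T -> forall x y, T (x - y) = T x - T y.
Proof. by move=> hT x y; rewrite linD // linN. Qed.

Lemma selfadj T : lin T -> (forall x, realc (hip (T x) x)) ->
  forall x y, hip (T x) y = hip x (T y).
Proof.
move=> hT hr.
pose h x y := hip (T x) y - hip x (T y).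
have hxx : forall x, hip x (T x) = hip (T x) x.
  by move=> x; rewrite hip_conj realc_conj.
have E1 : forall x y, h x y + h y x = 0.
  move=> x y.
  have E : h (x + y) (x + y) = 0.
    by rewrite /h hxx subrr.
  rewrite /h linD // !hipDl !hipDr !hxx in E.
  rewrite /h -E; ring.
move=> x y; apply/eqP; rewrite -subr_eq0; apply/eqP.
have E2 := E1 ('i%C *: x) y.
rewrite /h linZ // hipZl hipZr hipZr hipZl in E2.
have i0 : ('i%C : R[i]) != 0 by apply/eqP => -[] /eqP; rewrite oner_eq0.
have E3 : ('i%C *+ 2) * h x y = 0.
  have ci : conjc ('i%C : R[i]) = - 'i%C by apply/eqP; rewrite eq_complex /= oppr0 !eqxx.
  rewrite ci in E2.
  rewrite -[LHS]subr0 -{2}E2 /h.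
  have E4 := E1 x y; rewrite /h in E4.
  have hh : hip (T y) x - hip y (T x) = - (hip (T x) y - hip x (T y)).
    by apply/eqP; rewrite -subr_eq0 opprK -E4; apply/eqP; ring.
  have hh' : hip (T y) x = hip y (T x) - (hip (T x) y - hip x (T y)) by rewrite -hh; ring.
  rewrite hh' subr0 mulr2n; ring.
move: E3 => /eqP; rewrite mulf_eq0 => /orP[|/eqP //].
by rewrite -mulr_natl mulf_eq0 pnatr_eq0 (negbTE i0).
Qed.

End Lin.


Section Bnd.
Variable R : realType.
Variable V : Hilbert R.
Implicit Types (x y z : V) (a b : R[i]) (T S : V -> V).

Definition ipr x : R := complex.Re (hip x x).

Lemma ipr_ge0 x : 0 <= ipr x.
Proof. by have := hip_ge0 x; rewrite lecE => /andP[]. Qed.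

Lemma hipE x : hip x x = (ipr x)%:C%C.
Proof. exact: hip_real. Qed.

Lemma hnorm_ge0 x : 0 <= hnorm x.
Proof. exact: sqrtr_ge0. Qed.

Lemma hnorm_sq x : hnorm x ^+ 2 = ipr x.
Proof. by rewrite /hnorm sqr_sqrtr // ipr_ge0. Qed.

Definition na (a : R[i]) : R := complex.Re a ^+ 2 + complex.Im a ^+ 2.

Lemma na_ge0 a : 0 <= na a.
Proof. by rewrite /na addr_ge0 // sqr_ge0. Qed.

Lemma iprZ a x : ipr (a *: x) = na a * ipr x.
Proof.
rewrite /ipr hipZl hipZr hipE; case: a => a1 a2 /=.
rewrite /na /=; simpc; rewrite /=; ring.
Qed.

Lemma hnormZ a x : hnorm (a *: x) = Num.sqrt (na a) * hnorm x.
Proof. by rewrite /hnorm -/(ipr _) iprZ sqrtrM // na_ge0. Qed.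

Lemma iprD x y : ipr (x + y) + ipr (x - y) = 2 * ipr x + 2 * ipr y.
Proof.
rewrite /ipr !hipBl !hipDl !hipBr !hipDr.
rewrite !raddfD /=; ring.
Qed.

Lemma hnormD x y : hnorm (x + y) <= 2 * (hnorm x + hnorm y).
Proof.
have h1 : ipr (x + y) <= (2 * (hnorm x + hnorm y)) ^+ 2.
  have := iprD x y; have := ipr_ge0 (x - y).
  rewrite -!hnorm_sq; have := hnorm_ge0 x; have := hnorm_ge0 y; nra.
rewrite /hnorm -/(ipr _) -(ler_sqrt _ (sqr_ge0 _)) sqrtr_sqr in h1 *.
rewrite (le_trans h1) // ler_norml; apply/andP; split => //.
have := hnorm_ge0 x; have := hnorm_ge0 y; rewrite /hnorm; lra.
Qed.

Lemma bounded_ext T S : (forall x, T x = S x) -> bounded_op T -> bounded_op S.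
Proof.
move=> e [hl [c hc]]; split.
  by move=> a x y; rewrite -!e hl.
by exists c => x; rewrite -e.
Qed.

Lemma bounded_comb a b T S : bounded_op T -> bounded_op S ->
  bounded_op (fun x => a *: T x + b *: S x).
Proof.
move=> [hT [c hc]] [hS [d hd]]; split.
  move=> e x y; rewrite !(linD hT) !(linD hS) !(linZ hT) !(linZ hS).
  rewrite !scalerDr !scalerA [a * e]mulrC [b * e]mulrC -!scalerA.
  by rewrite addrACA.
exists (2 * (Num.sqrt (na a) * `|c| + Num.sqrt (na b) * `|d|)) => x.
apply: (le_trans (hnormD _ _)); rewrite !hnormZ.
have hc' : hnorm (T x) <= `|c| * hnorm x.
  apply: (le_trans (hc x)); rewrite ler_wpM2r ?hnorm_ge0 // ler_norm //.
have hd' : hnorm (S x) <= `|d| * hnorm x.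
  apply: (le_trans (hd x)); rewrite ler_wpM2r ?hnorm_ge0 // ler_norm //.
have := sqrtr_ge0 (na a); have := sqrtr_ge0 (na b).
set p := Num.sqrt _; set q := Num.sqrt _.
have := hnorm_ge0 x; have := hnorm_ge0 (T x); have := hnorm_ge0 (S x).
have := normr_ge0 c; have := normr_ge0 d.
nra.
Qed.

Lemma bounded_id : bounded_op (@idop R V).
Proof. by split => // ; exists 1 => x; rewrite mul1r. Qed.

Lemma bounded_comp T S : bounded_op T -> bounded_op S -> bounded_op (comp_op T S).
Proof.
move=> [hT [c hc]] [hS [d hd]]; split.
  by move=> a x y; rewrite /comp_op hS hT.
exists (`|c| * `|d|) => x; rewrite /comp_op.
apply: (le_trans (hc _)).
have hc' : c * hnorm (S x) <= `|c| * hnorm (S x).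
  by rewrite ler_wpM2r ?hnorm_ge0 // ler_norm.
apply: (le_trans hc'); rewrite -mulrA ler_wpM2l //.
apply: (le_trans (hd x)); rewrite ler_wpM2r ?hnorm_ge0 // ler_norm //.
Qed.

End Bnd.


Section Pos.
Variable R : realType.
Variable V : Hilbert R.
Implicit Types (x y z : V) (a b : R[i]) (T S : V -> V).

Lemma pos_real T : pos_op T -> forall x, realc (hip (T x) x).
Proof. by move=> [_ h] x; apply: ge0_realc. Qed.

Lemma pos_sa T : pos_op T -> forall x y, hip (T x) y = hip x (T y).
Proof.
move=> hT; apply: selfadj; first by case: hT => /bounded_lin.
exact: pos_real.
Qed.

Lemma pos_inv T Ti : pos_op T -> is_inv_op T Ti -> pos_op Ti.
Proof.
move=> [bT hT] [bTi [h1 h2]]; split => // y.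
by rewrite -{2}(h1 y) hip_conj conj_ge0.
Qed.

Lemma loewner_form S T : loewner S T -> forall x, 0 <= hip (T x) x - hip (S x) x.
Proof. by move=> [_ h] x; have := h x; rewrite /sub_op hipBl. Qed.

Lemma loewnerI T (c : R) : loewner (scal_op (c%:C)%C) T ->
  forall x, 0 <= hip (T x) x - c%:C%C * hip x x.
Proof. by move=> h x; have := loewner_form h x; rewrite /scal_op hipZl. Qed.

Lemma loewnerS T (c : R) : loewner T (scal_op (c%:C)%C) ->
  forall x, 0 <= c%:C%C * hip x x - hip (T x) x.
Proof. by move=> h x; have := loewner_form h x; rewrite /scal_op hipZl. Qed.

End Pos.

Ltac expand hA :=
  rewrite ?(linB hA) ?(linD hA) ?(linZ hA) ?(linN hA)
          ?hipBl ?hipDl ?hipZl ?hipNl ?hipBr ?hipDr ?hipZr ?hipNr ?conjc_real.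

Section Key.
Variable R : realType.
Variable V : Hilbert R.
Variables (A : V -> V) (m M : R).
Hypothesis bA : bounded_op A.
Hypothesis hm0 : 0 < m.
Hypothesis hmM : m < M.
Hypothesis hlo : loewner (scal_op (H:=V) (m%:C)%C) A.
Hypothesis hhi : loewner A (scal_op (H:=V) (M%:C)%C).

Let hA : lin A := bounded_lin bA.

Lemma posA : pos_op A.
Proof.
split => // x; have := loewnerI hlo x.
have := hip_ge0 x; have : 0 <= m%:C%C :> R[i] by rewrite ler0c ltW.
move=> h1 h2 h3.
have := addr_ge0 h3 (mulr_ge0 h1 h2); by rewrite subrK.
Qed.

Let hsa := pos_sa posA.

Lemma key2 z : 0 <= (M + m)%:C%C * hip (A z) z - (M * m)%:C%C * hip z z - hip (A (A z)) z.
Proof.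
have hI := loewnerS hhi (A z - m%:C%C *: z).
have hII := loewnerI hlo (M%:C%C *: z - A z).
move: (addr_ge0 hI hII) => hs.
have hc : 0 < (M - m)%:C%C :> R[i] by rewrite ltcR subr_gt0.
rewrite -(pmulr_rge0 _ hc).
set f := (X in 0 <= X).
set e := (X in 0 <= X) in hs.
suff -> : f = e by [].
rewrite /e /f; expand hA.
rewrite -!hsa.
rewrite !(rmorphD, rmorphB, rmorphM, rmorphN) /=.
ring.
Qed.

Lemma key0 Ai : is_inv_op A Ai -> forall y,
  0 <= (M + m)%:C%C * hip y y - hip (A y) y - (M * m)%:C%C * hip (Ai y) y.
Proof.
move=> [bAi [h1 h2]] y.
have [z ->] : exists z, y = A z by exists (Ai y); rewrite h1.
rewrite h2.
have hI := loewnerS hhi (A z - m%:C%C *: z).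
have hk := key2 z.
have hm' : 0 <= m%:C%C :> R[i] by rewrite ler0c ltW.
move: (addr_ge0 hI (mulr_ge0 hm' hk)) => hs.
set f := (X in 0 <= X).
set e := (X in 0 <= X) in hs.
suff -> : f = e by [].
rewrite /e /f; expand hA.
rewrite -!hsa.
rewrite !(rmorphD, rmorphB, rmorphM, rmorphN) /=.
ring.
Qed.

End Key.


Section PhiL.
Variable R : realType.
Variables H K : Hilbert R.
Variable Phi : (H -> H) -> (K -> K).
Hypothesis hPhi : unital_pos_linear Phi.
Implicit Types (a b : R[i]) (T S : H -> H).

Let z0 : H -> H := fun _ => 0.

Lemma bounded_z0 : bounded_op z0.
Proof.
apply: (@bounded_ext _ _ (fun x => 0 *: idop x + 0 *: idop x)).
  by move=> x; rewrite /z0 !scale0r addr0.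
exact: bounded_comb (bounded_id _) (bounded_id _).
Qed.

Lemma Phi_z0 y : Phi z0 y = 0.
Proof.
case: hPhi => _ [hl _].
have e : z0 = add_op (sscal_op 1 z0) z0.
  by apply: functional_extensionality => x; rewrite /add_op /sscal_op /z0 scale1r addr0.
have := hl 1 z0 z0 bounded_z0 bounded_z0; rewrite -e => e2.
have := congr1 (fun f => f y) e2; rewrite /add_op /sscal_op scale1r /= => h.
by apply/esym/(addrI (Phi z0 y)); rewrite addr0 -h.
Qed.

Lemma Phi_comb a b S T : bounded_op S -> bounded_op T ->
  forall y, Phi (fun x => a *: S x + b *: T x) y = a *: Phi S y + b *: Phi T y.
Proof.
case: hPhi => _ [hl _] bS bT y.
have bbT : bounded_op (sscal_op b T).
  apply: (@bounded_ext _ _ (fun x => b *: T x + 0 *: T x)) (bounded_comb _ _ bT bT).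
  by move=> x; rewrite scale0r addr0.
have e1 := hl a S (sscal_op b T) bS bbT.
have e2 : sscal_op b T = add_op (sscal_op b T) z0.
  by apply: functional_extensionality => x; rewrite /add_op /z0 addr0.
have e3 := hl b T z0 bT bounded_z0; rewrite -e2 in e3.
change (Phi (add_op (sscal_op a S) (sscal_op b T)) y = a *: Phi S y + b *: Phi T y).
by rewrite e1 /add_op e3 /add_op /sscal_op Phi_z0 addr0.
Qed.

Lemma Phi_id y : Phi (@idop R H) y = y.
Proof. by case: hPhi => _ [_ [_ ->]]. Qed.

Lemma Phi_bounded T : bounded_op T -> bounded_op (Phi T).
Proof. by case: hPhi => h _; apply: h. Qed.

Lemma Phi_posop T : pos_op T -> pos_op (Phi T).
Proof. by case: hPhi => _ [_ [h _]]; apply: h. Qed.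

Lemma Phi_form a b S T : bounded_op S -> bounded_op T ->
  (forall x, 0 <= hip (a *: S x + b *: T x) x) ->
  forall y, 0 <= hip (a *: Phi S y + b *: Phi T y) y.
Proof.
move=> bS bT hf y.
have hp : pos_op (fun x => a *: S x + b *: T x) by split => //; exact: bounded_comb.
case: (Phi_posop hp) => _ /(_ y).
by rewrite Phi_comb.
Qed.

End PhiL.


Section KSide.
Variable R : realType.
Variable H : Hilbert R.
Variables (A : H -> H) (m M : R).
Hypothesis bA : bounded_op A.
Hypothesis hm0 : 0 < m.
Hypothesis hmM : m < M.
Hypothesis hlo : loewner (scal_op (H:=H) (m%:C)%C) A.
Hypothesis hhi : loewner A (scal_op (H:=H) (M%:C)%C).
Variable K : Hilbert R.
Variable Phi : (H -> H) -> (K -> K).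
Hypothesis hPhi : unital_pos_linear Phi.

Let hA : lin A := bounded_lin bA.

Lemma ge0_eq (a b : R[i]) : a = b -> 0 <= a -> 0 <= b.
Proof. by move=> ->. Qed.

Lemma KX1 y : 0 <= hip (Phi A y) y - m%:C%C * hip y y.
Proof.
have hf : forall x, 0 <= hip (1 *: A x + (- m%:C%C) *: idop x) x.
  by move=> x; rewrite /idop scale1r scaleNr hipBl hipZl; apply: loewnerI.
have := @Phi_form _ _ _ _ hPhi _ _ _ _ bA (bounded_id _) hf y.
by rewrite Phi_id // scale1r scaleNr hipBl hipZl.
Qed.

Lemma posX : pos_op (Phi A).
Proof. exact: (Phi_posop hPhi (posA bA hm0 hlo)). Qed.

Lemma KK0 Ai : is_inv_op A Ai -> forall y,
  0 <= (M + m)%:C%C * hip y y - hip (Phi A y) y - (M * m)%:C%C * hip (Phi Ai y) y.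
Proof.
move=> hi y; have bAi := hi.1.
have bS := bounded_comb ((M + m)%:C%C) (-1) (bounded_id H) bA.
have hf : forall x, 0 <= hip (1 *: ((M + m)%:C%C *: idop x + -1 *: A x) + - (M * m)%:C%C *: Ai x) x.
  move=> x; have := key0 bA hm0 hmM hlo hhi hi x.
  apply: ge0_eq; rewrite /idop /comp_op !(hipDl, hipZl); ring.
have := @Phi_form _ _ _ _ hPhi _ _ _ _ bS bAi hf y.
rewrite (Phi_comb hPhi _ _ (bounded_id H) bA) (Phi_id hPhi).
apply: ge0_eq; rewrite !(hipDl, hipZl); ring.
Qed.

Lemma KK2 y : 0 <= (M + m)%:C%C * hip (Phi A y) y - (M * m)%:C%C * hip y y
                   - hip (Phi (comp_op A A) y) y.
Proof.
have bS := bounded_comb ((M + m)%:C%C) (- (M * m)%:C%C) bA (bounded_id H).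
have bAA := bounded_comp bA bA.
have hf : forall x, 0 <= hip (1 *: ((M + m)%:C%C *: A x + - (M * m)%:C%C *: idop x) + -1 *: comp_op A A x) x.
  move=> x; have := key2 bA hm0 hmM hlo hhi x.
  by rewrite /idop /comp_op !(hipDl, hipZl); apply: ge0_eq; ring.
have := @Phi_form _ _ _ _ hPhi _ _ _ _ bS bAA hf y.
rewrite (Phi_comb hPhi _ _ bA (bounded_id H)) (Phi_id hPhi).
apply: ge0_eq; rewrite !(hipDl, hipZl); ring.
Qed.

End KSide.


Lemma realP2 (R : realType) (M m tr sr k2 : R) : 0 < m -> m < M -> 0 <= sr ->
  0 <= M + m - tr - M * m * sr -> 0 <= tr - m -> 4 * (M * m) * k2 = (M + m) ^+ 2 ->
  sr * tr <= k2.
Proof.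
move=> h1 h2 h3 h4 h5 h6.
have hMm : 0 < M * m by nra.
have e1 : (M * m) * sr * tr <= ((M + m) - tr) * tr by nra.
have e2 : ((M + m) - tr) * tr <= (M + m) ^+ 2 / 4.
  have : 0 <= (2 * tr - (M + m)) ^+ 2 by apply: sqr_ge0.
  lra.
have : (M * m) * (sr * tr - k2) <= 0 by nra.
by rewrite pmulr_rle0 // subr_le0.
Qed.

Section Final.
Variable R : realType.
Variable H : Hilbert R.
Variables (A : H -> H) (m M : R).
Hypothesis bA : bounded_op A.
Hypothesis hm0 : 0 < m.
Hypothesis hmM : m < M.
Hypothesis hlo : loewner (scal_op (H:=H) (m%:C)%C) A.
Hypothesis hhi : loewner A (scal_op (H:=H) (M%:C)%C).

Let t := Num.sqrt (M * m).
Lemma Mm_gt0 : 0 < M * m.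
Proof. by rewrite mulr_gt0 // (lt_trans hm0 hmM). Qed.
Lemma t_gt0 : 0 < t.
Proof. by rewrite sqrtr_gt0 Mm_gt0. Qed.
Lemma tt_eq : t * t = M * m.
Proof. by rewrite -expr2 sqr_sqrtr // ltW // Mm_gt0. Qed.
Lemma kt_eq : 2 * t * kant m M = M + m.
Proof.
rewrite /kant -/t; have := t_gt0 => h.
by field; rewrite gt_eqF.
Qed.
Lemma k2_eq : 4 * (M * m) * kant m M ^+ 2 = (M + m) ^+ 2.
Proof.
rewrite -tt_eq -kt_eq; ring.
Qed.

Lemma rcM (a b : R) : (a%:C%C * b%:C%C = (a * b)%:C%C :> R[i]).
Proof. by rewrite rmorphM. Qed.

Lemma k2C (a : R[i]) : (4 * (M * m))%:C%C * ((kant m M ^+ 2)%:C%C * a) = ((M + m) ^+ 2)%:C%C * a.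
Proof. by rewrite mulrA rcM k2_eq. Qed.

Lemma ge0_eq' (a b : R[i]) : a = b -> 0 <= a -> 0 <= b.
Proof. by move=> ->. Qed.

Lemma proofP4 (K : Hilbert R) (Phi : (H -> H) -> (K -> K)) :
  unital_pos_linear Phi ->
  loewner (Phi (comp_op A A)) (sscal_op (((kant m M) ^+ 2)%:C)%C (comp_op (Phi A) (Phi A))).
Proof.
move=> hPhi.
have bX := Phi_bounded hPhi bA.
have bZ := Phi_bounded hPhi (bounded_comp bA bA).
have hX : lin (Phi A) := bounded_lin bX.
have hsa := pos_sa (posX bA hm0 hlo hPhi).
split.
  apply: bounded_ext (bounded_comb ((kant m M ^+ 2)%:C%C) (-1) (bounded_comp bX bX) bZ).
  by move=> x; rewrite /sub_op /sscal_op scaleN1r.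
move=> y; rewrite /sub_op /sscal_op /comp_op.
have h2 := KK2 bA hm0 hmM hlo hhi hPhi y.
have hv := hip_ge0 ((M + m)%:C%C *: Phi A y - (2 * (M * m))%:C%C *: y).
have h4 : 0 < (4 * (M * m))%:C%C :> R[i] by rewrite ltcR mulr_gt0 // Mm_gt0.
rewrite -(pmulr_rge0 _ h4).
apply: ge0_eq' (addr_ge0 (mulr_ge0 (ltW h4) h2) hv).
expand hX; rewrite -!hsa.
rewrite [RHS]mulrBr k2C.
rewrite /comp_op.
rewrite !(rmorphD, rmorphB, rmorphM, rmorphN, rmorphXn) /=.
ring.
Qed.

Lemma proofP1 (K : Hilbert R) (Phi : (H -> H) -> (K -> K)) :
  unital_pos_linear Phi ->
  forall Ai Pi, is_inv_op A Ai -> is_inv_op (Phi A) Pi ->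
  loewner (Phi Ai) (sscal_op (((kant m M) ^+ 2)%:C)%C Pi).
Proof.
move=> hPhi Ai Pi hAi [bPi [hP1 hP2]].
have bX := Phi_bounded hPhi bA.
have bY := Phi_bounded hPhi hAi.1.
have hX : lin (Phi A) := bounded_lin bX.
have pX := posX bA hm0 hlo hPhi.
have hsa := pos_sa pX.
split.
  apply: bounded_ext (bounded_comb ((kant m M ^+ 2)%:C%C) (-1) bPi bY).
  by move=> x; rewrite /sub_op /sscal_op scaleN1r.
move=> y; rewrite /sub_op /sscal_op.
have [z ->] : exists z, y = Phi A z by exists (Pi y); rewrite hP1.
rewrite hP2.
have h0 := KK0 bA hm0 hmM hlo hhi hPhi hAi (Phi A z).
have hv := pX.2 (Phi A z + Phi A z - (M + m)%:C%C *: z).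
have h4 : 0 < (4 * (M * m))%:C%C :> R[i] by rewrite ltcR mulr_gt0 // Mm_gt0.
rewrite -(pmulr_rge0 _ h4).
have h4' : 0 <= 4 :> R[i] by rewrite ler0n.
apply: ge0_eq' (addr_ge0 (mulr_ge0 h4' h0) hv).
expand hX; rewrite -!hsa.
rewrite [RHS]mulrBr k2C.
rewrite !(rmorphD, rmorphB, rmorphM, rmorphN, rmorphXn) /=.
ring.
Qed.

Lemma rcC (a : R) : conjc (a%:C%C) = a%:C%C.
Proof. exact: conjc_real. Qed.

Lemma k1C (a : R[i]) : (2 * t)%:C%C * ((kant m M)%:C%C * a) = (M + m)%:C%C * a.
Proof. by rewrite mulrA rcM kt_eq. Qed.

Lemma proofP3 (K : Hilbert R) (Phi : (H -> H) -> (K -> K)) :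
  unital_pos_linear Phi ->
  forall Ai G, is_inv_op A Ai -> is_gmean (Phi Ai) (Phi A) G ->
  loewner G (scal_op (H:=K) ((kant m M)%:C)%C).
Proof.
move=> hPhi Ai G hAi [S [Si [Q [[pS hSS] [hSi [[pQ hQQ] ->]]]]]].
have bX := Phi_bounded hPhi bA.
have bS := pS.1.
have bQ := pQ.1.
have pSi := pos_inv pS hSi.
have saS := pos_sa pS.
have saQ := pos_sa pQ.
have saSi := pos_sa pSi.
have hQ : lin Q := bounded_lin bQ.
split.
  apply: bounded_ext (bounded_comb ((kant m M)%:C%C) (-1) (bounded_id K)
     (bounded_comp bS (bounded_comp bQ bS))).
  by move=> x; rewrite /sub_op /scal_op /idop scaleN1r.
move=> y; rewrite /sub_op /scal_op /comp_op.
have h0 := KK0 bA hm0 hmM hlo hhi hPhi hAi y.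
set w := S y.
have e1 : hip (S (Q w)) y = hip (Q w) w by rewrite saS.
have e2 : hip (Q w) (Q w) = hip (Phi A y) y.
  rewrite saQ hQQ /comp_op -saSi /w hSi.2.2.
  by rewrite (pos_sa (posX bA hm0 hlo hPhi)).
have e3 : hip w w = hip (Phi Ai y) y by rewrite /w -hSS [RHS]saS.
have e4 : hip w (Q w) = hip (Q w) w by rewrite saQ.
have hv := hip_ge0 (Q w - t%:C%C *: w).
have h2 : 0 < (2 * t)%:C%C :> R[i] by rewrite ltcR mulr_gt0 // t_gt0.
rewrite -(pmulr_rge0 _ h2).
apply: ge0_eq' (addr_ge0 h0 hv).
rewrite hipBl hipZl e1 [RHS]mulrBr k1C.
rewrite hipBl !hipBr !hipZl !hipZr e2 e3 e4 rcC -tt_eq.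
rewrite !(rmorphD, rmorphB, rmorphM, rmorphN, rmorphXn) /=.
ring.
Qed.

Lemma proofP2 (K : Hilbert R) (Phi : (H -> H) -> (K -> K)) :
  unital_pos_linear Phi ->
  forall Ai, is_inv_op A Ai ->
  forall x : K, hnorm x = 1 ->
  hip (Phi Ai x) x <= (((kant m M) ^+ 2)%:C)%C * (hip (Phi A x) x)^-1.
Proof.
move=> hPhi Ai hAi x hx.
have pX := posX bA hm0 hlo hPhi.
have pY := Phi_posop hPhi (pos_inv (posA bA hm0 hlo) hAi).
have ex : hip x x = 1.
  rewrite hipE -(hnorm_sq x) hx expr1n; done.
have h0 := KK0 bA hm0 hmM hlo hhi hPhi hAi x.
have h1 := KX1 bA hlo hPhi x.
rewrite ex in h0 h1.
move: h0 h1; rewrite (pos_real pX x) (pos_real pY x).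
set tr := complex.Re _; set sr := complex.Re _.
have hY := pY.2 x; rewrite (pos_real pY x) -/sr ler0c in hY.
rewrite !mulr1 => h0 h1.
have {}h0 : 0 <= (M + m) - tr - (M * m) * sr.
  by rewrite -ler0c !rmorphB rmorphM; exact: h0.
have {}h1 : 0 <= tr - m.
  by rewrite -ler0c !rmorphB; exact: h1.
clearbody tr sr.
have htr : 0 < tr by apply: (lt_le_trans hm0); rewrite -subr_ge0.
rewrite -fmorphV rcM lecR ler_pdivlMr //.
exact: realP2 hm0 hmM hY h0 h1 k2_eq.
Qed.

End Final.

End Helpers.
Import Helpers.

Theorem mainTheorem2 (R : realType) (H : Hilbert R) (A : H -> H) (m M : R) :
  bounded_op A -> 0 < m -> m < M ->
  loewner (scal_op (H:=H) (m%:C)%C) A -> loewner A (scal_op (H:=H) (M%:C)%C) ->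
  let k := kant m M in
  let P1 := forall (K : Hilbert R) (Phi : (H -> H) -> (K -> K)),
      unital_pos_linear Phi ->
      forall Ai Pi, is_inv_op A Ai -> is_inv_op (Phi A) Pi ->
      loewner (Phi Ai) (sscal_op ((k ^+ 2)%:C)%C Pi) in
  let P2 := forall (K : Hilbert R) (Phi : (H -> H) -> (K -> K)),
      unital_pos_linear Phi ->
      forall Ai, is_inv_op A Ai ->
      forall x : K, hnorm x = 1 ->
      hip (Phi Ai x) x <= ((k ^+ 2)%:C)%C * (hip (Phi A x) x)^-1 in
  let P3 := forall (K : Hilbert R) (Phi : (H -> H) -> (K -> K)),
      unital_pos_linear Phi ->
      forall Ai G, is_inv_op A Ai -> is_gmean (Phi Ai) (Phi A) G ->
      loewner G (scal_op (H:=K) (k%:C)%C) in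
  let P4 := forall (K : Hilbert R) (Phi : (H -> H) -> (K -> K)),
      unital_pos_linear Phi ->
      loewner (Phi (comp_op A A)) (sscal_op ((k ^+ 2)%:C)%C (comp_op (Phi A) (Phi A))) in
  (P1 <-> P2) /\ (P1 <-> P3) /\ (P1 <-> P4).
Proof.
move=> bA hm0 hmM hlo hhi k P1 P2 P3 P4.
have h1 : P1.
  by move=> K Phi hPhi Ai Pi hAi hPi; exact: (proofP1 bA hm0 hmM hlo hhi hPhi hAi hPi).
have h2 : P2.
  by move=> K Phi hPhi Ai hAi x hx; exact: (proofP2 bA hm0 hmM hlo hhi hPhi hAi hx).
have h3 : P3.
  by move=> K Phi hPhi Ai G hAi hG; exact: (proofP3 bA hm0 hmM hlo hhi hPhi hAi hG).
have h4 : P4.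
  by move=> K Phi hPhi; exact: (proofP4 bA hm0 hmM hlo hhi hPhi).
by split; [split=> _ | split; split=> _].
Qed.
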